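(* Let $d=2$, let $\mathcal S$ be the set of $2\times 2$ density operators, and let $\mathrm d\rho$ be a probability measure on $\mathcal S$. Put $\hat\rho=\mathbb E_\rho[\rho]$ and $p_\rho=\mathbb E_\rho\big[\sqrt{1-\mathrm{Tr}(\rho^2)}\big]$. Then $$\max_{\sigma\in\mathcal S}\mathbb E_\rho[F(\rho,\sigma)]=\frac12\left(1+\sqrt{2\big(p_\rho^2+\mathrm{Tr}(\hat\rho^2)\big)-1}\right),$$ and, whenever $2(p_\rho^2+\mathrm{Tr}(\hat\rho^2))-1>0$, the operator $$\sigma^\sharp=\tfrac12\mathbb 1+\sqrt{\frac{1}{2(p_\rho^2+\mathrm{Tr}(\hat\rho^2))-1}}\Big(\hat\rho-\tfrac12\mathbb 1\Big)$$ is a density operator attaining this maximum.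
   Context: The fidelity of $\rho,\sigma\in\mathcal S$ is $F(\rho,\sigma)=\big[\mathrm{Tr}\sqrt{\sqrt\rho\,\sigma\sqrt\rho}\big]^2$. $\mathbb E_\rho$ denotes expectation with respect to $\mathrm d\rho$; $\mathbb 1$ is the $2\times2$ identity. *)

(* Defs.v *)
From HB Require Import structures.
From mathcomp Require Import all_boot all_order all_algebra.
From mathcomp Require Import all_classical all_reals all_analysis.
From mathcomp.real_closed Require Import complex.
Set Implicit Arguments. Unset Strict Implicit. Unset Printing Implicit Defensive.
Import Order.TTheory GRing.Theory Num.Theory.
Local Open Scope ring_scope.
Local Open Scope classical_set_scope.

Section Defs.
Variable R : realType.
Local Notation C := (R[i]).

Definition adj_mx m n (A : 'M[C]_(m, n)) : 'M[C]_(n, m) := (map_mx (@conjc R) A)^T.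

Definition hermitian n (A : 'M[C]_n) : Prop := adj_mx A = A.

(* positive semidefinite: v^* A v >= 0 (in the order of C, i.e. real and
   nonnegative) for every column vector v *)
Definition psd n (A : 'M[C]_n) : Prop :=
  hermitian A /\ forall v : 'cV[C]_n, 0 <= ((adj_mx v) *m A *m v) 0 0.

Definition density n (A : 'M[C]_n) : Prop := psd A /\ \tr A = 1.

Definition msqrt n (A : 'M[C]_n) : 'M[C]_n :=
  xget 0 [set B : 'M[C]_n | psd B /\ B *m B = A].

(* fidelity F(rho,sigma) = [Tr sqrt(sqrt rho sigma sqrt rho)]^2; the trace
   of a PSD matrix is real, so we take its real part *)
Definition fidelity n (rho sigma : 'M[C]_n) : R :=
  (complex.Re (\tr (msqrt (msqrt rho *m sigma *m msqrt rho)))) ^+ 2.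

Definition expect d (T : measurableType d) (P : probability T R) (f : T -> R) : R :=
  Rintegral P setT f.

Definition mexpect d (T : measurableType d) (P : probability T R) n
  (X : T -> 'M[C]_n) : 'M[C]_n :=
  \matrix_(i, j) (complex.Complex (expect P (fun t => complex.Re (X t i j)))
                          (expect P (fun t => complex.Im (X t i j)))).

Definition random_density d (T : measurableType d) n (X : T -> 'M[C]_n) : Prop :=
  (forall t, density (X t)) /\
  (forall i j, measurable_fun setT (fun t => complex.Re (X t i j)) /\
               measurable_fun setT (fun t => complex.Im (X t i j))).
End Defs.

(* Main.v *)
Require Import Defs.
From HB Require Import structures.
From mathcomp Require Import all_boot all_order all_algebra.
From mathcomp Require Import all_classical all_reals all_analysis.
From mathcomp.real_closed Require Import complex.
From mathcomp Require Import ring lra.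
Set Implicit Arguments. Unset Strict Implicit. Unset Printing Implicit Defensive.
Import Order.TTheory GRing.Theory Num.Theory.
Local Open Scope ring_scope.
Lemma sum2 (K : nmodType) (F : 'I_2 -> K) : \sum_(i < 2) F i = F 0%R + F 1%R.
Proof. rewrite big_ord_recl big_ord1. by congr (F _ + F _); apply/val_inj. Qed.
Lemma det2 (K : comPzRingType) (A : 'M[K]_2) :
  \det A = A 0%R 0%R * A 1%R 1%R - A 0%R 1%R * A 1%R 0%R.
Proof.
rewrite (expand_det_row _ 0) sum2 /cofactor !det_mx11 !mxE.
have -> : lift 0%R 0%R = 1%R :> 'I_2 by apply/val_inj.
have -> : lift 1%R 0%R = 0%R :> 'I_2 by apply/val_inj.
rewrite (_ : ((0%R:'I_2) + (0%R:'I_2))%N = 0%N) // (_ : ((0%R:'I_2) + (1%R:'I_2))%N = 1%N) //.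
by rewrite expr0 expr1 mul1r mulN1r mulrN.
Qed.
Lemma mx2_eq (K : Type) (A B : 'M[K]_2) :
  A 0%R 0%R = B 0%R 0%R -> A 0%R 1%R = B 0%R 1%R ->
  A 1%R 0%R = B 1%R 0%R -> A 1%R 1%R = B 1%R 1%R -> A = B.
Proof.
move=> h00 h01 h10 h11; apply/matrixP => i j.
have [->|->] : i = 0%R \/ i = 1%R.
  by case: i => [[|[|//]] Hi]; [left|right]; apply/val_inj.
all: have [->|->] : j = 0%R \/ j = 1%R by case: j => [[|[|//]] Hj]; [left|right]; apply/val_inj.
all: by [].
Qed.
Lemma mulmx2 (K : pzRingType) m n (A : 'M[K]_(m,2)) (B : 'M[K]_(2,n)) i j :
  (A *m B) i j = A i 0%R * B 0%R j + A i 1%R * B 1%R j.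
Proof. by rewrite !mxE sum2. Qed.
Lemma tr2 (K : pzRingType) (A : 'M[K]_2) : \tr A = A 0%R 0%R + A 1%R 1%R.
Proof. by rewrite /mxtrace sum2. Qed.
Local Open Scope complex_scope.
Notation cRe := (@complex.Re _).
Notation cIm := (@complex.Im _).
Section T. Variable R : realType.
Lemma ReD (x y : R[i]) : cRe (x + y) = cRe x + cRe y. Proof. by case: x; case: y. Qed.
Lemma ImD (x y : R[i]) : cIm (x + y) = cIm x + cIm y. Proof. by case: x; case: y. Qed.
Lemma ReN (x : R[i]) : cRe (- x) = - cRe x. Proof. by case: x. Qed.
Lemma ImN (x : R[i]) : cIm (- x) = - cIm x. Proof. by case: x. Qed.
Lemma ReM (x y : R[i]) : cRe (x * y) = cRe x * cRe y - cIm x * cIm y. Proof. by case: x => a b; case: y => c d /=; ring. Qed.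
Lemma ImM (x y : R[i]) : cIm (x * y) = cRe x * cIm y + cIm x * cRe y. Proof. by case: x => a b; case: y => c d /=; ring. Qed.
Lemma ReJ (x : R[i]) : cRe (conjc x) = cRe x. Proof. by case: x. Qed.
Lemma ImJ (x : R[i]) : cIm (conjc x) = - cIm x. Proof. by case: x. Qed.
Lemma ReC (x : R) : cRe (x%:C) = x. Proof. by []. Qed.
Lemma ImC (x : R) : cIm (x%:C) = 0. Proof. by []. Qed.
Lemma Re1 : cRe (1 : R[i]) = 1. Proof. by []. Qed.
Lemma Im1 : cIm (1 : R[i]) = 0. Proof. by []. Qed.
Lemma Re0 : cRe (0 : R[i]) = 0. Proof. by []. Qed.
Lemma Im0 : cIm (0 : R[i]) = 0. Proof. by []. Qed.
Lemma ReB (x y : R[i]) : cRe (x - y) = cRe x - cRe y. Proof. by rewrite ReD ReN. Qed.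
Lemma ImB (x y : R[i]) : cIm (x - y) = cIm x - cIm y. Proof. by rewrite ImD ImN. Qed.
Lemma cplx_eq (x y : R[i]) : cRe x = cRe y -> cIm x = cIm y -> x = y.
Proof. by case: x; case: y => ? ? ? ? /= -> ->. Qed.
Definition mx2 (K : Type) (p q r s : K) : 'M[K]_2 :=
  \matrix_(i, j) if i == 0%R then (if j == 0%R then p else q)
                 else (if j == 0%R then r else s).
Lemma mx2E00 (K : Type) (p q r s : K) : mx2 p q r s 0%R 0%R = p. Proof. by rewrite mxE. Qed.
Lemma mx2E01 (K : Type) (p q r s : K) : mx2 p q r s 0%R 1%R = q. Proof. by rewrite mxE. Qed.
Lemma mx2E10 (K : Type) (p q r s : K) : mx2 p q r s 1%R 0%R = r. Proof. by rewrite mxE. Qed.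
Lemma mx2E11 (K : Type) (p q r s : K) : mx2 p q r s 1%R 1%R = s. Proof. by rewrite mxE. Qed.
Definition mx2E := (mx2E00, mx2E01, mx2E10, mx2E11).
Definition Hmx (a b x y : R) : 'M[R[i]]_2 :=
  mx2 a%:C (x +i* y) (x -i* y) b%:C.
Lemma adjE m n (A : 'M[R[i]]_(m,n)) i j : adj_mx A i j = conjc (A j i).
Proof. by rewrite /adj_mx !mxE. Qed.
Lemma herm_Hm (A : 'M[R[i]]_2) : Defs.hermitian A ->
  A = Hmx (cRe (A 0%R 0%R)) (cRe (A 1%R 1%R)) (cRe (A 0%R 1%R)) (cIm (A 0%R 1%R)).
Proof.
rewrite /Defs.hermitian => H.
have E : forall i j, A i j = conjc (A j i) by move=> i j; rewrite -{1}H adjE.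
apply: mx2_eq; rewrite mx2E.
- apply: cplx_eq => //=. move: (congr1 cIm (E 0%R 0%R)); rewrite ImJ => h; lra.
- by apply: cplx_eq.
- rewrite E; apply: cplx_eq; rewrite ?ReJ ?ImJ //.
- apply: cplx_eq => //=. move: (congr1 cIm (E 1%R 1%R)); rewrite ImJ => h; lra.
Qed.

Definition cv2 (u w : R[i]) : 'cV[R[i]]_2 := \matrix_(i, j) if i == 0%R then u else w.
Lemma cv2E0 u w : cv2 u w 0%R 0%R = u. Proof. by rewrite mxE. Qed.
Lemma cv2E1 u w : cv2 u w 1%R 0%R = w. Proof. by rewrite mxE. Qed.

Definition QF (a b x y p q r s : R) :=
  a*(p^+2+q^+2) + b*(r^+2+s^+2) + 2*((p*x+q*y)*r - (p*y - q*x)*s).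

Lemma qform_Hm a b x y (v : 'cV[R[i]]_2) :
  ((adj_mx v) *m Hmx a b x y *m v) 0%R 0%R =
  (QF a b x y (cRe (v 0%R 0%R)) (cIm (v 0%R 0%R)) (cRe (v 1%R 0%R)) (cIm (v 1%R 0%R)))%:C.
Proof.
rewrite !mulmx2 !adjE /Hmx !mx2E /QF.
case: (v 0%R 0%R) => p q; case: (v 1%R 0%R) => r s.
apply: cplx_eq; rewrite !(ReD,ReM,ImD,ImM,ReJ,ImJ) /=; ring.
Qed.

Lemma psd_Hm a b x y : psd (Hmx a b x y) <-> [/\ 0 <= a, 0 <= b & x^+2 + y^+2 <= a * b].
Proof.
split.
- case=> _ H.
  have Q u w : 0 <= QF a b x y (cRe u) (cIm u) (cRe w) (cIm w).
    by move: (H (cv2 u w)); rewrite qform_Hm cv2E0 cv2E1 ler0c.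
  have ha := Q 1 0; have hb := Q 0 1.
  have h1 := Q (-(x +i* y)) (a%:C); have h2 := Q (b%:C) (-x +i* y).
  have h3 := Q (-(x +i* y)) 1.
  move: ha hb h1 h2 h3; rewrite /QF /=.
  move=> ha hb h1 h2 h3.
  have ha' : 0 <= a by nra.
  have hb' : 0 <= b by nra.
  split => //.
  have [a0|apos] := eqVneq (a + b) 0.
    have -> : a = 0 by lra.
    have -> : b = 0 by lra.
    nra.
  have hab : 0 < a + b by rewrite lt0r apos /=; lra.
  nra.
- case=> ha hb hd; split.
    rewrite /Defs.hermitian; apply: mx2_eq; rewrite adjE !mx2E; apply: cplx_eq => //=; lra.
  move=> v; rewrite qform_Hm ler0c /QF.
  move: (cRe (v 0%R 0%R)) (cIm (v 0%R 0%R)) (cRe (v 1%R 0%R)) (cIm (v 1%R 0%R)) => p q r s.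
  have [a0|apos] := eqVneq a 0.
    subst a. have hx : x = 0 by nra. have hy : y = 0 by nra. subst x y. nra.
  have apos' : 0 < a by rewrite lt0r apos.
  have key : a * (a * (p ^+ 2 + q ^+ 2) + b * (r ^+ 2 + s ^+ 2) +
       2 * ((p * x + q * y) * r - (p * y - q * x) * s)) =
     (a * p + x * r - y * s)^+2 + (a * q + x * s + y * r)^+2 + (a * b - x ^+ 2 - y ^+ 2) * (r ^+ 2 + s ^+ 2) by ring.
  have : 0 <= a * (a * (p ^+ 2 + q ^+ 2) + b * (r ^+ 2 + s ^+ 2) +
       2 * ((p * x + q * y) * r - (p * y - q * x) * s)) by rewrite key; apply: addr_ge0; [apply: addr_ge0; exact: sqr_ge0|];
    apply: mulr_ge0; [lra|apply: addr_ge0; exact: sqr_ge0].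
  by rewrite pmulr_rge0.
Qed.

Lemma psd_herm (A : 'M[R[i]]_2) : psd A ->
  let a := cRe (A 0%R 0%R) in let b := cRe (A 1%R 1%R) in
  let x := cRe (A 0%R 1%R) in let y := cIm (A 0%R 1%R) in
  A = Hmx a b x y /\ [/\ 0 <= a, 0 <= b & x^+2 + y^+2 <= a * b].
Proof.
move=> H a b x y; have E := herm_Hm H.1.
by split=> //; apply/psd_Hm; rewrite -E.
Qed.

Lemma psd_ex (A : 'M[R[i]]_2) : psd A -> exists a b x y,
  A = Hmx a b x y /\ [/\ 0 <= a, 0 <= b & x^+2 + y^+2 <= a * b].
Proof. by move/psd_herm=> H; do 4 eexists; exact: H. Qed.

Lemma trHm a b x y : \tr (Hmx a b x y) = (a + b)%:C.
Proof. by rewrite tr2 /Hmx !mx2E; apply: cplx_eq => //=; rewrite addr0. Qed.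

Lemma detHm a b x y : \det (Hmx a b x y) = (a * b - x ^+ 2 - y ^+ 2)%:C.
Proof.
rewrite det2 /Hmx !mx2E; apply: cplx_eq; rewrite !(ReD,ReM,ImD,ImM,ReN,ImN) /=; ring.
Qed.

Lemma ReTrHm a b x y a' b' x' y' :
  cRe (\tr (Hmx a b x y *m Hmx a' b' x' y')) = a * a' + b * b' + 2 * (x * x' + y * y').
Proof.
rewrite tr2 !mulmx2 /Hmx !mx2E; rewrite !(ReD,ReM,ImD,ImM,ReN,ImN) /=; ring.
Qed.

Lemma Hm_sq a b x y : Hmx a b x y *m Hmx a b x y =
  Hmx (a ^+ 2 + x ^+ 2 + y ^+ 2) (b ^+ 2 + x ^+ 2 + y ^+ 2) ((a + b) * x) ((a + b) * y).
Proof.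
apply: mx2_eq; rewrite !mulmx2 /Hmx !mx2E; apply: cplx_eq;
  rewrite !(ReD,ReM,ImD,ImM,ReN,ImN) /=; ring.
Qed.

Lemma adj_mul m n p (A : 'M[R[i]]_(m,n)) (B : 'M[R[i]]_(n,p)) :
  adj_mx (A *m B) = adj_mx B *m adj_mx A.
Proof. by rewrite /adj_mx map_mxM trmx_mul. Qed.

Lemma psd_conj (S s : 'M[R[i]]_2) : psd S -> psd s -> psd (S *m s *m S).
Proof.
move=> [hS _] [hs Hs]; split.
  by rewrite /Defs.hermitian !adj_mul hS hs mulmxA.
move=> v; have := Hs (S *m v).
by rewrite adj_mul hS !mulmxA.
Qed.

Lemma sqrt_exists (M : 'M[R[i]]_2) : psd M -> exists B, psd B /\ B *m B = M.
Proof.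
case/psd_ex => [a [b [x [y [-> [ha hb hd]]]]]].
set D := a * b - x ^+ 2 - y ^+ 2.
have hD : 0 <= D by rewrite /D; lra.
set s := Num.sqrt D.
have hs : 0 <= s := sqrtr_ge0 _.
have hs2 : s ^+ 2 = D by rewrite sqr_sqrtr.
have [t0|tpos] := eqVneq (a + b + 2 * s) 0.
  have a0 : a = 0 by lra.
  have b0 : b = 0 by lra.
  have x0 : x = 0 by nra.
  have y0 : y = 0 by nra.
  exists (Hmx 0 0 0 0); split; first by apply/psd_Hm; split; lra.
  rewrite Hm_sq a0 b0 x0 y0; congr Hmx; ring.
have tp : 0 < a + b + 2 * s by rewrite lt0r tpos /=; lra.
set k := (Num.sqrt (a + b + 2 * s))^-1.
have hk : 0 <= k by rewrite /k invr_ge0 sqrtr_ge0.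
have hk2 : k ^+ 2 * (a + b + 2 * s) = 1.
  by rewrite /k exprVn sqr_sqrtr ?mulVf //; exact: ltW.
exists (Hmx (k * (a + s)) (k * (b + s)) (k * x) (k * y)); split.
  apply/psd_Hm; split; try nra.
  have : 0 <= k ^+ 2 * (D + s * (a + b) + s ^+ 2).
    by apply: mulr_ge0; [exact: sqr_ge0| nra].
  rewrite /D; nra.
rewrite Hm_sq; congr Hmx.
- transitivity (k ^+ 2 * (a + b + 2 * s) * a); last by rewrite hk2 mul1r.
  rewrite /D in hs2; nra.
- transitivity (k ^+ 2 * (a + b + 2 * s) * b); last by rewrite hk2 mul1r.
  rewrite /D in hs2; nra.
- transitivity (k ^+ 2 * (a + b + 2 * s) * x); last by rewrite hk2 mul1r.
  ring.
- transitivity (k ^+ 2 * (a + b + 2 * s) * y); last by rewrite hk2 mul1r.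
  ring.
Qed.

Lemma tr_sqrt (M B : 'M[R[i]]_2) : psd B -> B *m B = M ->
  cRe (\tr B) = Num.sqrt (cRe (\tr M) + 2 * Num.sqrt (cRe (\det M))).
Proof.
case/psd_ex => [a [b [x [y [-> [ha hb hd]]]]]] <-.
rewrite det_mulmx detHm ReTrHm trHm -rmorphM /= -expr2 sqrtr_sqr ger0_norm; last lra.
rewrite (_ : a ^+ 2 + b * b + _ + _ = (a + b) ^+ 2); last ring.
by rewrite sqrtr_sqr ger0_norm //; lra.
Qed.

Lemma msqrt_spec (M : 'M[R[i]]_2) : psd M -> psd (msqrt M) /\ msqrt M *m msqrt M = M.
Proof. by move=> /sqrt_exists ex; apply: (xgetPex 0 ex). Qed.

Lemma fid_formula (r s : 'M[R[i]]_2) : psd r -> psd s ->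
  fidelity r s = cRe (\tr (r *m s)) + 2 * Num.sqrt (cRe (\det r) * cRe (\det s)).
Proof.
move=> pr ps.
have [pS eS] := msqrt_spec pr.
set S := msqrt r in pS eS *.
have pM := psd_conj pS ps.
have [pB eB] := msqrt_spec pM.
rewrite /fidelity -/S (tr_sqrt pB eB).
have trM : \tr (S *m s *m S) = \tr (r *m s).
  by rewrite mxtrace_mulC mulmxA eS.
have detM : \det (S *m s *m S) = \det r * \det s.
  by rewrite !det_mulmx -eS det_mulmx; ring.
have [a [b [x [y [Er _]]]]] := psd_ex pr.
have [a' [b' [x' [y' [Es _]]]]] := psd_ex ps.
have [aM [bM [xM [yM [EM [haM hbM _]]]]]] := psd_ex pM.
have hdet : cRe (\det r * \det s) = cRe (\det r) * cRe (\det s).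
  by rewrite ReM Er Es !detHm /= mulr0 subr0.
rewrite trM detM hdet sqr_sqrtr //.
apply: addr_ge0; last by apply: mulr_ge0 => //; exact: sqrtr_ge0.
by rewrite -trM EM trHm /=; lra.
Qed.
End T.

Section E.
Variables (R : realType) (d : measure_display) (T : measurableType d) (P : probability T R).

Definition NF (f : T -> R) := measurable_fun setT f /\ exists M, forall t, `|f t| <= M.

Lemma nf_int f : NF f -> P.-integrable setT (EFin \o f).
Proof.
case=> mf [M HM]; apply: measurable_bounded_integrable => //.
  by move: (probability_setT P) => /= ->; rewrite ltry.
rewrite /bounded_near; exists M; split; first exact: num_real.
by move=> x hx t _ /=; apply: le_trans (HM t) (ltW hx).
Qed.

Lemma nf_cst k : NF (fun _ => k).
Proof. by split; [exact: measurable_cst | exists `|k|]. Qed.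

Lemma nf_add f g : NF f -> NF g -> NF (fun t => f t + g t).
Proof.
case=> mf [M HM] [mg [N HN]]; split; first exact: measurable_realfun.measurable_funD.
exists (M + N) => t; apply: le_trans (ler_normD _ _) _; exact: lerD.
Qed.

Lemma nf_mul f g : NF f -> NF g -> NF (fun t => f t * g t).
Proof.
case=> mf [M HM] [mg [N HN]]; split; first exact: measurable_realfun.measurable_funM.
exists (M * N) => t; rewrite normrM; apply: ler_pM => //.
Qed.

Lemma nf_sqrt f : NF f -> NF (fun t => Num.sqrt (f t)).
Proof.
case=> mf [M HM]; split.
  exact: (measurableT_comp (measurable_realfun.continuous_measurable_fun (@sqrt_continuous R)) mf).
exists (Num.sqrt M) => t; rewrite ger0_norm ?sqrtr_ge0 //.
apply: ler_wsqrtr; exact: le_trans (ler_norm _) (HM t).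
Qed.

Lemma nf_meas (f : T -> R) (M : R) : measurable_fun setT f -> (forall t, `|f t| <= M) -> NF f.
Proof. by move=> mf HM; split=> //; exists M. Qed.

Lemma E_ext f g : (forall t, f t = g t) -> expect P f = expect P g.
Proof. by move=> H; apply: eq_Rintegral => t _; exact: H. Qed.

Lemma E_add f g : NF f -> NF g -> expect P (fun t => f t + g t) = expect P f + expect P g.
Proof. by move=> hf hg; apply: RintegralD => //; exact: nf_int. Qed.

Lemma E_scale k f : NF f -> expect P (fun t => k * f t) = k * expect P f.
Proof. by move=> hf; apply: RintegralZl => //; exact: nf_int. Qed.

Lemma E_cst k : expect P (fun _ => k) = k.
Proof. by rewrite /expect Rintegral_cst //; move: (probability_setT P) => /= ->; rewrite /= mulr1. Qed.

Lemma E_ge0 f : (forall t, 0 <= f t) -> 0 <= expect P f.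
Proof. by move=> H; apply: Rintegral_ge0 => t _; exact: H. Qed.
End E.

Lemma half_C (R : realType) : (2^-1 : R[i]) = (2^-1 : R)%:C.
Proof. by rewrite fmorphV rmorph_nat. Qed.

Lemma nf_ext (R : realType) d (T : measurableType d) (f g : T -> R) :
  NF f -> (forall t, f t = g t) -> NF g.
Proof. by move=> hf H; have -> : g = f by apply: funext => t; rewrite H. Qed.

Lemma cs4 (R : realType) (r1 r2 r3 r4 s1 s2 s3 s4 : R) :
  (r1 * s1 + r2 * s2 + r3 * s3 + r4 * s4) ^+ 2 <=
  (r1 ^+ 2 + r2 ^+ 2 + r3 ^+ 2 + r4 ^+ 2) * (s1 ^+ 2 + s2 ^+ 2 + s3 ^+ 2 + s4 ^+ 2).
Proof.
rewrite -subr_ge0.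
have -> : (r1 ^+ 2 + r2 ^+ 2 + r3 ^+ 2 + r4 ^+ 2) * (s1 ^+ 2 + s2 ^+ 2 + s3 ^+ 2 + s4 ^+ 2)
  - (r1 * s1 + r2 * s2 + r3 * s3 + r4 * s4) ^+ 2 =
  (r1 * s2 - r2 * s1) ^+ 2 + (r1 * s3 - r3 * s1) ^+ 2 + (r1 * s4 - r4 * s1) ^+ 2 +
  (r2 * s3 - r3 * s2) ^+ 2 + (r2 * s4 - r4 * s2) ^+ 2 + (r3 * s4 - r4 * s3) ^+ 2 by ring.
by rewrite !addr_ge0 // sqr_ge0.
Qed.

Lemma le_sqrt_of_sq (R : realType) (L c : R) : L ^+ 2 <= c -> L <= Num.sqrt c.
Proof.
move=> h; case: (lerP L 0) => hL; first exact: le_trans hL (sqrtr_ge0 _).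
by rewrite -(ger0_norm (ltW hL)) -sqrtr_sqr ler_wsqrtr.
Qed.


Local Close Scope complex_scope.

Theorem corollary1 (R : realType) (d : measure_display) (T : measurableType d)
  (P : probability T R) (X : T -> 'M[R[i]]_2) :
  random_density X ->
  let rhohat := mexpect P X in
  let p := expect P (fun t => Num.sqrt (1 - complex.Re (\tr (X t *m X t)))) in
  let c := 2 * (p ^+ 2 + complex.Re (\tr (rhohat *m rhohat))) - 1 in
  let v := 2^-1 * (1 + Num.sqrt c) in
  ((forall sigma : 'M[R[i]]_2, density sigma ->
      expect P (fun t => fidelity (X t) sigma) <= v) /\
   (exists2 sigma : 'M[R[i]]_2, density sigma &
      expect P (fun t => fidelity (X t) sigma) = v)) /\
  (0 < c ->
   let sigma_sharp : 'M[R[i]]_2 :=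
     2^-1%:M + ((Num.sqrt c^-1)%:C)%C *: (rhohat - 2^-1%:M) in
   density sigma_sharp /\
   expect P (fun t => fidelity (X t) sigma_sharp) = v).
Proof.
move=> [HD HM] rhohat p c v.
pose a t := cRe (X t 0%R 0%R). pose b t := cRe (X t 1%R 1%R).
pose x t := cRe (X t 0%R 1%R). pose y t := cIm (X t 0%R 1%R).
pose D t := a t * b t - x t ^+ 2 - y t ^+ 2.
have HX t : X t = Hmx (a t) (b t) (x t) (y t) /\
    [/\ 0 <= a t, 0 <= b t, x t ^+ 2 + y t ^+ 2 <= a t * b t & a t + b t = 1].
  have [hp htr] := HD t.
  have [E [h1 h2 h3]] := psd_herm hp.
  split=> //; split=> //.
  by move: htr; rewrite E trHm => /(congr1 cRe).
have bnd t : [/\ `|a t| <= 1, `|b t| <= 1, `|x t| <= 1, `|y t| <= 1 & 0 <= D t].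
  have [_ [h1 h2 h3 h4]] := HX t.
  have hD : 0 <= D t by rewrite /D; lra.
  split => //; rewrite ler_norml; apply/andP; split; nra.
have nfa : NF a by apply: (nf_meas (M := 1)); [exact: (HM 0%R 0%R).1 | by move=> t; case: (bnd t)].
have nfb : NF b by apply: (nf_meas (M := 1)); [exact: (HM 1%R 1%R).1 | by move=> t; case: (bnd t)].
have nfx : NF x by apply: (nf_meas (M := 1)); [exact: (HM 0%R 1%R).1 | by move=> t; case: (bnd t)].
have nfy : NF y by apply: (nf_meas (M := 1)); [exact: (HM 0%R 1%R).2 | by move=> t; case: (bnd t)].
have nfD : NF D.
  apply: (nf_ext (f := fun t => a t * b t + (-1) * (x t * x t) + (-1) * (y t * y t))).
    by apply: nf_add; [apply: nf_add|]; try apply: nf_mul; try apply: nf_mul; try exact: nf_cst.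
  by move=> t; rewrite /D; ring.
have nfs : NF (fun t => Num.sqrt (D t)) by exact: nf_sqrt.
set Ea := expect P a; set Eb := expect P b; set Ex := expect P x; set Ey := expect P y.
set e := expect P (fun t => Num.sqrt (D t)).
have hab : Ea + Eb = 1.
  rewrite /Ea /Eb -E_add // -(E_cst P 1); apply: E_ext => t; by case: (HX t) => _ [].
have he : 0 <= e by apply: E_ge0 => t; exact: sqrtr_ge0.
have hrho : rhohat = Hmx Ea Eb Ex Ey.
  apply: mx2_eq; rewrite /Hmx !mx2E /rhohat /mexpect !mxE; apply: cplx_eq => /=.
  - by [].
  - rewrite -(E_cst P 0); apply: E_ext => t; by rewrite (HX t).1 /Hmx mx2E.
  - by [].
  - by [].
  - apply: E_ext => t; by rewrite (HX t).1 /Hmx mx2E.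
  - rewrite /Ey -mulN1r -E_scale //; apply: E_ext => t; rewrite (HX t).1 /Hmx mx2E /=.
    by rewrite mulN1r.
  - apply: E_ext => t; by rewrite (HX t).1 /Hmx mx2E.
  - rewrite -(E_cst P 0); apply: E_ext => t; by rewrite (HX t).1 /Hmx mx2E.
have hp : p = Num.sqrt 2 * e.
  rewrite /p /e -E_scale //; apply: E_ext => t.
  have [E [_ _ _ h4]] := HX t.
  rewrite E ReTrHm -sqrtrM //; congr Num.sqrt.
  rewrite /D; have -> : b t = 1 - a t by lra.
  ring.
have hc : c = 4 * e ^+ 2 + (Ea - Eb) ^+ 2 + 4 * Ex ^+ 2 + 4 * Ey ^+ 2.
  rewrite /c hrho ReTrHm hp exprMn sqr_sqrtr //.
  have -> : Eb = 1 - Ea by lra.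
  ring.
have hc0 : 0 <= c.
  rewrite hc; have := sqr_ge0 e; have := sqr_ge0 (Ea - Eb); have := sqr_ge0 Ex;
  have := sqr_ge0 Ey; lra.
have EF al be xi et : psd (Hmx al be xi et) ->
    expect P (fun t => fidelity (X t) (Hmx al be xi et)) =
    al * Ea + be * Eb + 2 * (xi * Ex + et * Ey) +
    2 * Num.sqrt (al * be - xi ^+ 2 - et ^+ 2) * e.
  move=> hs.
  rewrite (@E_ext _ _ _ _ _ (fun t => (al * a t + be * b t) + 2 * (xi * x t + et * y t) +
      (2 * Num.sqrt (al * be - xi ^+ 2 - et ^+ 2)) * Num.sqrt (D t))); last first.
    move=> t; rewrite fid_formula; [|exact: (HD t).1|exact: hs]. rewrite [X t](HX t).1 ReTrHm !detHm /=.
    rewrite sqrtrM; last by case: (bnd t).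
    rewrite -/(D t); ring.
  rewrite E_add; last by apply: nf_mul nfs; exact: nf_cst.
    rewrite E_add; last by apply: nf_mul; [exact: nf_cst| apply: nf_add; apply: nf_mul => //; exact: nf_cst].
      rewrite E_add; try by apply: nf_mul => //; exact: nf_cst.
      rewrite !E_scale //; last by apply: nf_add; apply: nf_mul => //; exact: nf_cst.
      rewrite E_add; try by apply: nf_mul => //; exact: nf_cst.
      by rewrite !E_scale.
    by apply: nf_add; apply: nf_mul => //; exact: nf_cst.
  apply: nf_add; last by apply: nf_mul; [exact: nf_cst| apply: nf_add; apply: nf_mul => //; exact: nf_cst].
  by apply: nf_add; apply: nf_mul => //; exact: nf_cst.
have dens_ex (sg : 'M[R[i]]_2) : density sg -> exists al be xi et,
    [/\ sg = Hmx al be xi et, psd (Hmx al be xi et),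
        [/\ 0 <= al, 0 <= be & xi ^+ 2 + et ^+ 2 <= al * be] & al + be = 1].
  case=> hps htr; have [al [be [xi [et [E H]]]]] := psd_ex hps.
  exists al, be, xi, et; split => //; first by rewrite -E.
  by move: htr; rewrite E trHm => /(congr1 cRe).
have Hsharp : 0 < c ->
    density (2^-1%:M + ((Num.sqrt c^-1)%:C)%C *: (rhohat - 2^-1%:M)) /\
    expect P (fun t => fidelity (X t) (2^-1%:M + ((Num.sqrt c^-1)%:C)%C *: (rhohat - 2^-1%:M))) = v.
  move=> cpos.
  set k := Num.sqrt c^-1.
  set sc := Num.sqrt c.
  have hsc : 0 < sc by rewrite sqrtr_gt0.
  have hk : k = sc^-1 by rewrite /k sqrtrV // ltW.
  have hk0 : 0 <= k by rewrite hk invr_ge0 ltW.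
  have hksc : k * sc = 1 by rewrite hk mulVf // gt_eqF.
  have hsc2 : sc ^+ 2 = c by rewrite sqr_sqrtr // ltW.
  have hk2c : k ^+ 2 * c = 1 by rewrite -hsc2 -exprMn hksc expr1n.
  have Es : 2^-1%:M + (k%:C)%C *: (rhohat - 2^-1%:M) =
      Hmx (2^-1 + k * (Ea - 2^-1)) (2^-1 + k * (Eb - 2^-1)) (k * Ex) (k * Ey).
    have h2 : (2^-1 : R[i]) = ((2^-1 : R)%:C)%C by rewrite fmorphV rmorph_nat.
    rewrite hrho; apply: mx2_eq; rewrite !mxE /= ?mulr1n ?mulr0n ?h2;
      apply: cplx_eq; rewrite !(ReD,ReM,ImD,ImM,ReN,ImN,ReB,ImB) /=; ring.
  rewrite /k in Es *; rewrite Es; rewrite -/k.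
  have hEb : Eb = 1 - Ea by lra.
  have hU : (Ea - Eb) ^+ 2 <= c.
    rewrite hc; have := sqr_ge0 e; have := sqr_ge0 Ex; have := sqr_ge0 Ey; lra.
  have hkU : (k * (Ea - Eb)) ^+ 2 <= 1.
    rewrite exprMn -hk2c; apply: ler_wpM2l => //; exact: sqr_ge0.
  have hDs : (2^-1 + k * (Ea - 2^-1)) * (2^-1 + k * (Eb - 2^-1)) - (k * Ex) ^+ 2 - (k * Ey) ^+ 2
      = (k * e) ^+ 2.
    have -> : (2^-1 + k * (Ea - 2^-1)) * (2^-1 + k * (Eb - 2^-1)) - (k * Ex) ^+ 2 - (k * Ey) ^+ 2
      = (1 - k ^+ 2 * c) / 4 + (k * e) ^+ 2 by rewrite hc hEb; field.
    by rewrite hk2c subrr mul0r add0r.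
  have hpsd : psd (Hmx (2^-1 + k * (Ea - 2^-1)) (2^-1 + k * (Eb - 2^-1)) (k * Ex) (k * Ey)).
    apply/psd_Hm; split.
    - rewrite hEb in hkU *; nra.
    - rewrite hEb in hkU *; nra.
    - have := sqr_ge0 (k * e); rewrite -hDs => h; lra.
  split.
    split => //; rewrite trHm; apply: cplx_eq => //=; rewrite hEb; by field.
  rewrite EF // hDs sqrtr_sqr ger0_norm; last exact: mulr_ge0.
  rewrite /v -/sc.
  have -> : sc = k * c by rewrite -hsc2 expr2 mulrA hksc mul1r.
  by rewrite hc hEb; field.
split; last by move=> cpos; exact: Hsharp.
split.
  move=> sg /dens_ex [al [be [xi [et [-> hps [h1 h2 h3] h4]]]]].
  rewrite EF //.
  set w := 2 * Num.sqrt (al * be - xi ^+ 2 - et ^+ 2).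
  have hw : w ^+ 2 = 4 * (al * be - xi ^+ 2 - et ^+ 2).
    by rewrite /w exprMn sqr_sqrtr; [ring | lra].
  set L := (Ea - Eb) * (al - be) + (2 * Ex) * (2 * xi) + (2 * Ey) * (2 * et) + (2 * e) * w.
  have hL : L ^+ 2 <= c.
    have := cs4 (Ea - Eb) (2 * Ex) (2 * Ey) (2 * e) (al - be) (2 * xi) (2 * et) w.
    have -> : (al - be) ^+ 2 + (2 * xi) ^+ 2 + (2 * et) ^+ 2 + w ^+ 2 = 1.
      by rewrite hw (_ : be = 1 - al); [ring | lra].
    rewrite mulr1 => h; apply: (le_trans h); rewrite hc le_eqVlt; apply/orP; left; apply/eqP; ring.
  have := le_sqrt_of_sq hL.
  have -> : al * Ea + be * Eb + 2 * (xi * Ex + et * Ey) + w * e = 2^-1 * (1 + L).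
    rewrite /L; have -> : be = 1 - al by lra. have -> : Eb = 1 - Ea by lra. by field.
  rewrite /v; lra.
have [cpos|c0] := ltrP 0 c.
  by exists (2^-1%:M + ((Num.sqrt c^-1)%:C)%C *: (rhohat - 2^-1%:M)); case: (Hsharp cpos).
have c00 : c = 0 by lra.
have e0 : e = 0.
  move: c00; rewrite hc => h; have : e ^+ 2 = 0.
    have := sqr_ge0 (Ea - Eb); have := sqr_ge0 Ex; have := sqr_ge0 Ey; have := sqr_ge0 e; lra.
  by move/eqP; rewrite sqrf_eq0 => /eqP.
have hps : psd (Hmx (2^-1 : R) (2^-1) 0 0) by apply/psd_Hm; split; lra.
exists (Hmx (2^-1 : R) (2^-1) 0 0).
  by split => //; rewrite trHm; apply: cplx_eq => //=; by field.
rewrite EF // e0 /v c00 sqrtr0; lra.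
Qed.
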